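(* Let $k$ be a field, $R=k[x,y]$, $I=(x^d,y^d,x^by^{d-b})$ with $d\ge2$, $1\le b\le d-b$, $\gcd(d,b)=1$, $J=(x^d,y^d)$, and for $\ell\ge1$ write $JI^{\ell-1}:I^\ell=(x^{s_\ell},y^{t_\ell})$ with nonnegative integers $s_\ell,t_\ell$. Then: (i) there is a least index $\ell_0\ge1$ such that $s_{\ell_0}=1$ or $t_{\ell_0}=1$; (ii) there is a least index $\ell_0'\ge1$ such that $s_{\ell_0'}=t_{\ell_0'}=1$, i.e. $JI^{\ell_0'-1}:I^{\ell_0'}=(x,y)$; (iii) $\ell_0'\ge d-\ell_0$. *)

(* Defs.v *)
(* R = k[x,y] is modelled as {poly {poly k}}:
   x is the inner variable (embedded as a constant), y the outer one. *)
From HB Require Import structures.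
From mathcomp Require Import all_boot all_order all_algebra.
Set Implicit Arguments. Unset Strict Implicit. Unset Printing Implicit Defensive.
Import GRing.Theory.
Local Open Scope ring_scope.

Section Bivariate.
Variable k : fieldType.

Definition bipoly := {poly {poly k}}.
Definition varx : bipoly := ('X : {poly k})%:P.
Definition vary : bipoly := 'X.

Definition in_ideal (gs : seq bipoly) (f : bipoly) : Prop :=
  exists cs : seq bipoly, size cs = size gs /\
    f = \sum_(i < size gs) cs`_i * gs`_i.

Definition gens_mul (gs hs : seq bipoly) : seq bipoly :=
  [seq a * b | a <- gs, b <- hs].

Fixpoint gens_pow (gs : seq bipoly) (n : nat) : seq bipoly :=
  if n is n'.+1 then gens_mul gs (gens_pow gs n') else [:: 1].

Definition in_colon (A B : seq bipoly) (f : bipoly) : Prop :=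
  forall g, in_ideal B g -> in_ideal A (f * g).

Definition Igens (d b : nat) : seq bipoly :=
  [:: varx ^+ d; vary ^+ d; varx ^+ b * vary ^+ (d - b)].
Definition Jgens (d : nat) : seq bipoly := [:: varx ^+ d; vary ^+ d].

Definition in_colonJI (d b l : nat) (f : bipoly) : Prop :=
  in_colon (gens_mul (Jgens d) (gens_pow (Igens d b) l.-1))
           (gens_pow (Igens d b) l) f.

End Bivariate.

(* Main.v *)
Require Import Defs.
From HB Require Import structures.
From mathcomp Require Import all_boot all_order all_algebra.
From mathcomp Require Import zify.
Set Implicit Arguments. Unset Strict Implicit. Unset Printing Implicit Defensive.
Import GRing.Theory.
Local Open Scope ring_scope.

Section S.
Variable k : fieldType.
Local Notation P := (bipoly k).
Definition mono (e f : nat) : P := varx k ^+ e * vary k ^+ f.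

Lemma monoM e f e' f' : mono e f * mono e' f' = mono (e+e') (f+f').
Proof. by rewrite /mono !exprD mulrACA. Qed.

Definition co (A C : nat) (p : P) : k := (p`_C)`_A.

Lemma co_mono c e f A C : co A C (c * mono e f) =
  if (e <= A)%N && (f <= C)%N then co (A-e) (C-f) c else 0.
Proof.
rewrite /co /mono /varx /vary -polyC_exp mulrA.
rewrite (coefMXn (R := {poly k})) (coefMC (R := {poly k})).
case: (ltnP C f) => Hf; rewrite ?andbF ?coef0 //= andbT.
by rewrite coefMXn; case: (ltnP A e).
Qed.

Lemma co_sum A C n (F : 'I_n -> P) : co A C (\sum_(i < n) F i) = \sum_(i < n) co A C (F i).
Proof. by rewrite /co !coef_sum. Qed.

Lemma not_in_ideal (gs : seq P) A C :
  (forall g, g \in gs -> exists e f, g = mono e f /\ ~~ ((e <= A) && (f <= C))%N) ->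
  ~ in_ideal gs (mono A C).
Proof.
move=> H [cs [_ E]].
have : co A C (mono A C) = 0.
  rewrite E co_sum big1 // => i _.
  have [e [f [-> /negbTE Hn]]] := H _ (mem_nth 0 (ltn_ord i)).
  by rewrite co_mono Hn.
rewrite -[mono A C]mul1r co_mono !leqnn /= !subnn /co coef1 /= coef1 /=.
by move/eqP; rewrite oner_eq0.
Qed.

Lemma in_ideal_nth (gs : seq P) i : (i < size gs)%N -> in_ideal gs gs`_i.
Proof.
move=> Hi; exists (mkseq (fun j => (j == i)%:R) (size gs)); split; first by rewrite size_mkseq.
rewrite (bigD1 (Ordinal Hi)) //= nth_mkseq // eqxx mul1r big1 ?addr0 // => j Hj.
have Hj' : (j : nat) != i by apply: contra Hj => /eqP E; apply/eqP/val_inj.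
by rewrite nth_mkseq // (negbTE Hj') mul0r.
Qed.

Lemma in_ideal_mem (gs : seq P) g : g \in gs -> in_ideal gs g.
Proof. by move=> H; rewrite -(nth_index 0 H); apply: in_ideal_nth; rewrite index_mem. Qed.

Lemma in_idealM (gs : seq P) h f : in_ideal gs f -> in_ideal gs (h * f).
Proof.
move=> [cs [Hs ->]]; exists (map (fun c => h * c) cs); split; first by rewrite size_map.
rewrite mulr_sumr; apply: eq_bigr => i _; rewrite (nth_map 0) ?mulrA // Hs; exact: ltn_ord.
Qed.

Lemma in_idealD (gs : seq P) f g : in_ideal gs f -> in_ideal gs g -> in_ideal gs (f + g).
Proof.
move=> [cs1 [H1 ->]] [cs2 [H2 ->]].
exists (mkseq (fun j => cs1`_j + cs2`_j) (size gs)); split; first by rewrite size_mkseq.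
by rewrite -big_split; apply: eq_bigr => i _; rewrite nth_mkseq // mulrDl.
Qed.

Lemma in_ideal0 (gs : seq P) : in_ideal gs 0.
Proof.
exists (nseq (size gs) 0); split; first by rewrite size_nseq.
by rewrite big1 // => i _; rewrite nth_nseq if_same mul0r.
Qed.

Lemma in_ideal_sum (gs : seq P) n (F : 'I_n -> P) : (forall i, in_ideal gs (F i)) ->
  in_ideal gs (\sum_(i < n) F i).
Proof.
move=> H; apply: (big_ind (in_ideal gs)); [exact: in_ideal0|exact: in_idealD|by []].
Qed.

Lemma in_ideal_div (gs : seq P) e f A C : in_ideal gs (mono e f) -> (e <= A)%N -> (f <= C)%N ->
  in_ideal gs (mono A C).
Proof.
move=> H He Hf.
have -> : mono A C = mono (A - e) (C - f) * mono e f by rewrite monoM !subnK.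
exact: in_idealM.
Qed.

Lemma colon_gen (A B : seq P) f : (forall g, g \in B -> in_ideal A (f * g)) -> in_colon A B f.
Proof.
move=> H g [cs [_ ->]]; rewrite mulr_sumr; apply: in_ideal_sum => i.
by rewrite mulrCA; apply: in_idealM; apply: H; apply: mem_nth.
Qed.


Lemma monoX0 e : varx k ^+ e = mono e 0.
Proof. by rewrite /mono expr0 mulr1. Qed.
Lemma mono0Y f : vary k ^+ f = mono 0 f.
Proof. by rewrite /mono expr0 mul1r. Qed.

Lemma monoX1 : varx k = mono 1 0.
Proof. by rewrite -monoX0 expr1. Qed.
Lemma monoY1 : vary k = mono 0 1.
Proof. by rewrite -mono0Y expr1. Qed.

Lemma gens_pow_shape d b n g : g \in gens_pow (Igens k d b) n ->
  exists i j kk, (i + j + kk = n)%N /\ g = mono (d*j + b*i) (d*kk + (d-b)*i).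
Proof.
elim: n g => [|n IH] g /=.
  rewrite inE => /eqP ->; exists 0%N, 0%N, 0%N; split=> //.
  by rewrite /mono !muln0 !expr0 mulr1.
case/allpairsP => [[a h] [/= Ha Hh ->]].
have [i [j [kk [Hn ->]]]] := IH _ Hh.
move: Ha; rewrite !inE => /orP [/eqP ->|/orP [/eqP ->|/eqP ->]].
- exists i, j.+1, kk; split; first lia.
  by rewrite monoX0 monoM; congr mono; nia.
- exists i, j, kk.+1; split; first lia.
  by rewrite mono0Y monoM; congr mono; nia.
- exists i.+1, j, kk; split; first lia.
  by rewrite monoM; congr mono; nia.
Qed.

Lemma gens_pow_mem d b n i j kk : (i + j + kk = n)%N ->
  mono (d*j + b*i) (d*kk + (d-b)*i) \in gens_pow (Igens k d b) n.
Proof.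
elim: n i j kk => [|n IH] i j kk H /=.
  have [-> -> ->] : [/\ i = 0, j = 0 & kk = 0]%N by split; lia.
  by rewrite /mono !muln0 !expr0 mulr1 inE.
have step : forall a e f e' f', a = mono e f -> a \in Igens k d b ->
    mono e' f' \in gens_pow (Igens k d b) n ->
    mono (e + e') (f + f') \in gens_mul (Igens k d b) (gens_pow (Igens k d b) n).
  by move=> a e f e' f' Ha Ha' Hm; rewrite -monoM -Ha; apply: allpairs_f.
case: i H => [|i] H.
  case: j H => [|j] H.
    case: kk H => [|kk] H; first lia.
    rewrite (_ : mono _ _ = mono (0 + (d*0 + b*0)) (d + (d*kk + (d-b)*0))); last by congr mono; nia.
    apply: (step _ _ _ _ _ (mono0Y d)); first by rewrite !inE eqxx orbT.
    by apply: IH; lia.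
  rewrite (_ : mono _ _ = mono (d + (d*j + b*0)) (0 + (d*kk + (d-b)*0))); last by congr mono; nia.
  apply: (step _ _ _ _ _ (monoX0 d)); first by rewrite !inE eqxx.
  by apply: IH; lia.
rewrite (_ : mono _ _ = mono (b + (d*j + b*i)) ((d-b) + (d*kk + (d-b)*i))); last by congr mono; nia.
apply: (step _ _ _ _ _ (erefl (mono b (d-b)))); first by rewrite !inE eqxx !orbT.
by apply: IH; lia.
Qed.

Lemma gens_mul_shape d (A : seq P) g : g \in gens_mul (Jgens k d) A ->
  exists h, h \in A /\ (g = mono d 0 * h \/ g = mono 0 d * h).
Proof.
case/allpairsP => [[a h] [/= Ha Hh ->]]; exists h; split=> //.
by move: Ha; rewrite !inE => /orP [/eqP ->|/eqP ->]; [left; rewrite monoX0|right; rewrite mono0Y].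
Qed.

Lemma JI_mem_x d b l i j kk : (i + j + kk = l.-1)%N ->
  in_ideal (gens_mul (Jgens k d) (gens_pow (Igens k d b) l.-1))
     (mono (d + (d*j + b*i)) (0 + (d*kk + (d-b)*i))).
Proof.
move=> H; apply: in_ideal_mem; rewrite -monoM -monoX0; apply: allpairs_f.
  by rewrite !inE eqxx.
exact: gens_pow_mem.
Qed.

Lemma JI_mem_y d b l i j kk : (i + j + kk = l.-1)%N ->
  in_ideal (gens_mul (Jgens k d) (gens_pow (Igens k d b) l.-1))
     (mono (0 + (d*j + b*i)) (d + (d*kk + (d-b)*i))).
Proof.
move=> H; apply: in_ideal_mem; rewrite -monoM -mono0Y; apply: allpairs_f.
  by rewrite !inE eqxx orbT.
exact: gens_pow_mem.
Qed.

Lemma NM d b l a c : (1 <= l)%N -> (b <= d)%N ->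
  (forall m J, (1 <= m <= l)%N -> (J <= m)%N -> (b * m <= d*J + c)%N ->
      (d*J <= b * m + a)%N -> False) ->
  ~ in_ideal (gens_mul (Jgens k d) (gens_pow (Igens k d b) l.-1))
        (mono (b * l + a) ((d-b) * l + c)).
Proof.
move=> Hl Hb H; apply: not_in_ideal => g /gens_mul_shape [h [Hh Hg]].
have [i [j [kk [Hn Eh]]]] := gens_pow_shape Hh.
have El : l = (i + j + kk + 1)%N by lia.
subst l; rewrite Eh !monoM in Hg.
case: Hg => ->; (eexists; eexists; split; first reflexivity);
  apply/negP => /andP [H1 H2].
- by apply: (H (j + kk + 1)%N (j + 1)%N); nia.
- by apply: (H (j + kk + 1)%N j); nia.
Qed.


Lemma K0 d b m J : coprime d b -> (0 < m < d)%N -> d * J = (b * m)%N -> False.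
Proof.
move=> Hc /andP[H0 H1] E.
have : (d %| m)%N by rewrite -(Gauss_dvdr _ Hc) -E dvdn_mulr.
by move/(dvdn_leq H0); lia.
Qed.

Lemma not_colon1 d b l : coprime d b -> (1 <= l < d)%N -> (b <= d)%N ->
  ~ @in_colonJI k d b l 1.
Proof.
move=> Hc /andP[Hl1 Hld] Hb Hcol.
have Hg : mono (d*0 + b * l) (d*0 + (d-b) * l) \in gens_pow (Igens k d b) l.
  by apply: gens_pow_mem; lia.
have := Hcol _ (in_ideal_mem Hg).
rewrite mul1r (_ : mono _ _ = mono (b * l + 0) ((d-b) * l + 0)); last by congr mono; nia.
apply: NM => // m J /andP [Hm1 Hm2] HJ H1 H2.
by apply: (K0 (m:=m) (J:=J) Hc); [apply/andP; split; lia|nia].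
Qed.

Lemma not_colonx d b l m1 : coprime d b -> (1 <= l)%N -> (l < m1)%N -> (m1 < d)%N ->
  (b <= d)%N -> (forall m, (0 < m)%N -> (d %| b * m + 1)%N -> (m1 <= m)%N) ->
  ~ in_colonJI d b l (varx k).
Proof.
move=> Hc Hl1 Hlm Hmd Hb min1 Hcol.
have Hg : mono (d*0 + b * l) (d*0 + (d-b) * l) \in gens_pow (Igens k d b) l.
  by apply: gens_pow_mem; lia.
have := Hcol _ (in_ideal_mem Hg).
rewrite monoX1 monoM (_ : mono _ _ = mono (b * l + 1) ((d-b) * l + 0)); last by congr mono; nia.
apply: NM => // m J /andP [Hm1 Hm2] HJ H1 H2.
case: (ltnP (d * J) (b * m).+1) => H3.
  by apply: (K0 (m:=m) (J:=J) Hc); [apply/andP; split; lia|nia].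
have E : (b * m + 1 = J * d)%N by nia.
have := min1 m Hm1; rewrite E dvdn_mull // => /(_ isT); lia.
Qed.

Lemma not_colony d b l m2 : coprime d b -> (1 <= l)%N -> (l < m2)%N -> (m2 < d)%N ->
  (b <= d)%N -> (forall m, (0 < m)%N -> (d %| b * m - 1)%N -> (m2 <= m)%N) ->
  ~ in_colonJI d b l (vary k).
Proof.
move=> Hc Hl1 Hlm Hmd Hb min2 Hcol.
have Hg : mono (d*0 + b * l) (d*0 + (d-b) * l) \in gens_pow (Igens k d b) l.
  by apply: gens_pow_mem; lia.
have := Hcol _ (in_ideal_mem Hg).
rewrite monoY1 monoM (_ : mono _ _ = mono (b * l + 0) ((d-b) * l + 1)); last by congr mono; nia.
apply: NM => // m J /andP [Hm1 Hm2] HJ H1 H2.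
case: (ltnP (d * J) (b * m)) => H3; last first.
  by apply: (K0 (m:=m) (J:=J) Hc); [apply/andP; split; lia|nia].
have E : (b * m - 1 = J * d)%N by nia.
have := min2 m Hm1; rewrite E dvdn_mull // => /(_ isT); lia.
Qed.

Lemma colonx d b l m1 : (1 <= l < d)%N -> (b < d)%N -> (0 < m1)%N -> (m1 <= l)%N ->
  (d %| b * m1 + 1)%N -> in_colonJI d b l (varx k).
Proof.
move=> /andP [Hl1 Hld] Hb Hm1 Hml D1.
apply: colon_gen => g /gens_pow_shape [i [j [kk [Hn ->]]]].
rewrite monoX1 monoM.
case: j Hn => [|j] Hn.
  case: kk Hn => [|kk] Hn.
    have [j1 Ej1] : exists j1, (b * m1 + 1 = j1 * d)%N by apply/dvdnP.
    have Hj1 : (1 <= j1)%N by nia.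
    have Hj1' : (j1 <= m1)%N by nia.
    apply: (in_ideal_div (JI_mem_x d b (l:=l) (i := (l - m1)%N) (j := j1.-1) (kk := (m1 - j1)%N) _)).
    - lia.
    - nia.
    - nia.
  apply: (in_ideal_div (JI_mem_y d b (l:=l) (i := i) (j := 0%N) (kk := kk) _)).
  - lia.
  - nia.
  - nia.
apply: (in_ideal_div (JI_mem_x d b (l:=l) (i := i) (j := j) (kk := kk) _)).
- lia.
- nia.
- nia.
Qed.

Lemma colony d b l m2 : (1 <= l < d)%N -> (b < d)%N -> (0 < m2)%N -> (m2 <= l)%N ->
  (0 < b)%N -> (d %| b * m2 - 1)%N -> in_colonJI d b l (vary k).
Proof.
move=> /andP [Hl1 Hld] Hb Hm1 Hml Hb0 D1.
apply: colon_gen => g /gens_pow_shape [i [j [kk [Hn ->]]]].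
rewrite monoY1 monoM.
case: j Hn => [|j] Hn.
  case: kk Hn => [|kk] Hn.
    have [j1 Ej1] : exists j1, (b * m2 - 1 = j1 * d)%N by apply/dvdnP.
    have Hj1' : (j1 < m2)%N by nia.
    apply: (in_ideal_div (JI_mem_y d b (l:=l) (i := (l - m2)%N) (j := j1) (kk := (m2 - j1 - 1)%N) _)).
    - lia.
    - nia.
    - nia.
  apply: (in_ideal_div (JI_mem_y d b (l:=l) (i := i) (j := 0%N) (kk := kk) _)).
  - lia.
  - nia.
  - nia.
apply: (in_ideal_div (JI_mem_x d b (l:=l) (i := i) (j := j) (kk := kk) _)).
- lia.
- nia.
- nia.
Qed.

Lemma two_gen_ne0 s t : ~ in_ideal [:: varx k ^+ s; vary k ^+ t] 1 -> (s != 0)%N /\ (t != 0)%N.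
Proof.
move=> H1; split; apply/eqP => E; apply: H1; apply: in_ideal_mem;
  by rewrite E expr0 !inE eqxx ?orbT.
Qed.

Lemma two_gen_x s t : ~ in_ideal [:: varx k ^+ s; vary k ^+ t] 1 ->
  in_ideal [:: varx k ^+ s; vary k ^+ t] (varx k) -> s = 1%N.
Proof.
move=> H1 Hx; have [s0 t0] := two_gen_ne0 H1.
apply/eqP; rewrite eqn_leq lt0n s0 andbT leqNgt; apply/negP => Hs.
move: Hx; rewrite [X in in_ideal _ X]monoX1; apply: not_in_ideal.
move=> g; rewrite !inE => /orP [/eqP ->|/eqP ->].
  by exists s, 0%N; rewrite monoX0; split=> //; apply/negP => /andP []; move: s0 t0; lia.
by exists 0%N, t; rewrite mono0Y; split=> //; apply/negP => /andP []; move: s0 t0; lia.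
Qed.

Lemma two_gen_y s t : ~ in_ideal [:: varx k ^+ s; vary k ^+ t] 1 ->
  in_ideal [:: varx k ^+ s; vary k ^+ t] (vary k) -> t = 1%N.
Proof.
move=> H1 Hx; have [s0 t0] := two_gen_ne0 H1.
apply/eqP; rewrite eqn_leq lt0n t0 andbT leqNgt; apply/negP => Hs.
move: Hx; rewrite [X in in_ideal _ X]monoY1; apply: not_in_ideal.
move=> g; rewrite !inE => /orP [/eqP ->|/eqP ->].
  by exists s, 0%N; rewrite monoX0; split=> //; apply/negP => /andP []; move: s0 t0; lia.
by exists 0%N, t; rewrite mono0Y; split=> //; apply/negP => /andP []; move: s0 t0; lia.
Qed.

Lemma two_gen_x_ne s t : ~ in_ideal [:: varx k ^+ s; vary k ^+ t] (varx k) -> s <> 1%N.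
Proof. by move=> H E; apply: H; apply: in_ideal_mem; rewrite E expr1 !inE eqxx. Qed.

Lemma two_gen_y_ne s t : ~ in_ideal [:: varx k ^+ s; vary k ^+ t] (vary k) -> t <> 1%N.
Proof. by move=> H E; apply: H; apply: in_ideal_mem; rewrite E expr1 !inE eqxx orbT. Qed.

End S.

Theorem mainTheorem10 (k : fieldType) (d b : nat) (s t : nat -> nat) :
  (2 <= d)%N -> (1 <= b)%N -> (b <= d - b)%N -> coprime d b ->
  (forall l, (1 <= l)%N ->
     (forall f : bipoly k, in_colonJI d b l f <->
        in_ideal [:: varx k ^+ s l; vary k ^+ t l] f)
     /\ (s l == 0%N) = (t l == 0%N)) ->
  exists l0 l0' : nat,
    [/\ (1 <= l0)%N /\ (s l0 = 1%N \/ t l0 = 1%N)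
        /\ (forall l, (1 <= l < l0)%N -> ~ (s l = 1%N \/ t l = 1%N)),
        (1 <= l0')%N /\ (s l0' = 1%N /\ t l0' = 1%N)
        /\ (forall l, (1 <= l < l0')%N -> ~ (s l = 1%N /\ t l = 1%N))
      & (d - l0 <= l0')%N].
Proof.
move=> Hd Hb1 Hbd Hc Hst.
have Hb : (b < d)%N by lia.
have Hbd' : (b <= d)%N by lia.
have Hd0 : (0 < d)%N by lia.
have [a Ha Hda] := Bezoutl b Hd0.
rewrite (eqP Hc) in Hda.
have ex1 : exists m, (0 < m)%N && (d %| b * m + 1)%N.
  exists a; apply/andP; split; last by rewrite addnC mulnC.
  rewrite lt0n; apply/negP => /eqP a0; move: Hda; rewrite a0 mul0n addn0 dvdn1; lia.
have [m1 /andP [Hm1 D1] min1] := ex_minnP ex1.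
have Ham : (m1 <= a)%N.
  apply: min1; apply/andP; split; last by rewrite addnC mulnC.
  rewrite lt0n; apply/negP => /eqP a0; move: Hda; rewrite a0 mul0n addn0 dvdn1; lia.
have min1' : forall m, (0 < m)%N -> (d %| b * m + 1)%N -> (m1 <= m)%N.
  by move=> m H0 HD; apply: min1; rewrite H0 HD.
have ex2 : exists m, (0 < m)%N && (d %| b * m - 1)%N.
  exists (d - m1)%N; apply/andP; split; first lia.
  by rewrite mulnBr -subnDA; apply: dvdn_sub; [apply: dvdn_mull; exact: dvdnn|].
have [m2 /andP [Hm2 D2] min2] := ex_minnP ex2.
have min2' : forall m, (0 < m)%N -> (d %| b * m - 1)%N -> (m2 <= m)%N.
  by move=> m H0 HD; apply: min2; rewrite H0 HD.
have Hm2d : (m2 <= d - m1)%N.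
  apply: min2'; first lia.
  by rewrite mulnBr -subnDA; apply: dvdn_sub; [apply: dvdn_mull; exact: dvdnn|].
have Hsum : (d <= m1 + m2)%N.
  have : (d %| b * (m1 + m2))%N.
    rewrite (_ : b * (m1 + m2) = (b * m1 + 1) + (b * m2 - 1))%N; last nia.
    exact: dvdn_add.
  rewrite (Gauss_dvdr _ Hc) => /dvdn_leq; apply; lia.
have F1 : forall l, (1 <= l < d)%N -> ~ in_ideal [:: varx k ^+ s l; vary k ^+ t l] 1.
  move=> l Hl; have [Hiff _] := Hst l (proj1 (andP Hl)).
  by move/Hiff; apply: not_colon1.
have SX : forall l, (m1 <= l < d)%N -> s l = 1%N.
  move=> l /andP [H1 H2]; have Hl1 : (1 <= l)%N by lia.
  have [Hiff _] := Hst l Hl1.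
  apply: two_gen_x; first by apply: F1; lia.
  by apply/Hiff; apply: (colonx (m1 := m1)) => //; lia.
have TY : forall l, (m2 <= l < d)%N -> t l = 1%N.
  move=> l /andP [H1 H2]; have Hl1 : (1 <= l)%N by lia.
  have [Hiff _] := Hst l Hl1.
  apply: two_gen_y; first by apply: F1; lia.
  by apply/Hiff; apply: (colony (m2 := m2)) => //; lia.
have SXn : forall l, (1 <= l < m1)%N -> s l <> 1%N.
  move=> l /andP [H1 H2]; have [Hiff _] := Hst l H1.
  apply: two_gen_x_ne; move/Hiff; apply: (not_colonx (m1 := m1)) => //; lia.
have TYn : forall l, (1 <= l < m2)%N -> t l <> 1%N.
  move=> l /andP [H1 H2]; have [Hiff _] := Hst l H1.
  apply: two_gen_y_ne; move/Hiff; apply: (not_colony (m2 := m2)) => //; lia.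
case: (leqP m1 m2) => Hle.
  exists m1, m2; split.
  - split=> //; split; first by left; apply: SX; lia.
    move=> l /andP [H1 H2] [E|E]; [apply: (SXn l) | apply: (TYn l)] => //; lia.
  - split=> //; split; first by split; [apply: SX|apply: TY]; lia.
    move=> l /andP [H1 H2] [_ E]; apply: (TYn l) => //; lia.
  - lia.
exists m2, m1; split.
- split=> //; split; first by right; apply: TY; lia.
  move=> l /andP [H1 H2] [E|E]; [apply: (SXn l) | apply: (TYn l)] => //; lia.
- split=> //; split; first by split; [apply: SX|apply: TY]; lia.
  move=> l /andP [H1 H2] [E _]; apply: (SXn l) => //; lia.
- lia.
Qed.
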